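(* Let $(F_n)_{n\ge 0}$ be the Fibonacci sequence with $F_0=0$, $F_1=1$, $F_n=F_{n-1}+F_{n-2}$ for $n\ge2$. For all integers $k\ge 0$ and $m\ge 0$, $$[\underbrace{4,4,\dots,4}_{m},\,2k+3]=\frac{F_{3m+4}+k\,F_{3m+3}}{F_{3m+1}+k\,F_{3m}},$$ where the continued fraction has $m+1$ entries $a_0,\dots,a_m$ with $a_i=4$ for $0\le i<m$ and $a_m=2k+3$.
   Context: For numbers $a_0,a_1,\dots,a_m$, the finite simple continued fraction $[a_0,a_1,\dots,a_m]$ denotes $a_0+\cfrac{1}{a_1+\cfrac{1}{\ddots+\cfrac{1}{a_m}}}$, evaluated as a rational number; $[a_0]=a_0$. *)

(* Defs.v *)
From HB Require Import structures.
From mathcomp Require Import all_boot all_order all_algebra.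
Set Implicit Arguments. Unset Strict Implicit. Unset Printing Implicit Defensive.
Import Order.TTheory GRing.Theory Num.Theory.
Local Open Scope ring_scope.

Fixpoint fib (n : nat) : nat :=
  match n with
  | 0 => 0
  | 1 => 1
  | (m.+1 as p).+1 => fib p + fib m
  end%N.

(* Finite simple continued fraction [a_0; a_1, ..., a_m] evaluated in rat.
   cf [::] is an unused default (0); cf [:: a] = a;
   cf (a :: s) = a + 1 / cf s for s nonempty. *)
Fixpoint cf (s : seq rat) : rat :=
  match s with
  | [::] => 0
  | [:: a] => a
  | a :: t => a + (cf t)^-1
  end.

(* Main.v *)
Require Import Defs.
From mathcomp Require Import all_boot all_order all_algebra.
From mathcomp Require Import zify ring lra.
Import GRing.Theory Num.Theory.
Local Open Scope ring_scope.

Lemma fibS (n : nat) : fib n.+2 = (fib n.+1 + fib n)%N.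
Proof. by []. Qed.

Lemma fib6 (n : nat) : fib (n + 6) = (4 * fib (n + 3) + fib n)%N.
Proof.
rewrite !addnS !addn0 !fibS. lia.
Qed.

Lemma fib_pos (n : nat) : (0 < fib n.+1)%N.
Proof.
elim: n => [|n IH] //. rewrite fibS. lia.
Qed.

Theorem theorem2 (k m : nat) :
  cf (rcons (nseq m (4%:R : rat)) (2 * k + 3)%N%:R)
  = ((fib (3 * m + 4))%:R + k%:R * (fib (3 * m + 3))%:R)
    / ((fib (3 * m + 1))%:R + k%:R * (fib (3 * m))%:R).
Proof.
elim: m => [|m IH].
  rewrite /= mulr0 addr0 divr1 !natrD ?natrM.
  ring.
have h1 : (3 * m.+1 + 4 = (3 * m + 1) + 6)%N by lia.
have h2 : (3 * m.+1 + 3 = (3 * m) + 6)%N by lia.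
have h3 : (3 * m.+1 + 1 = 3 * m + 4)%N by lia.
have h4 : (3 * m.+1 = 3 * m + 3)%N by lia.
have h5 : (3 * m + 1 + 3 = 3 * m + 4)%N by lia.
rewrite h1 h2 h3 h4 !fib6 h5.
rewrite [nseq _ _]/= rcons_cons.
case E: (rcons (nseq m (4%:R : rat)) (2 * k + 3)%N%:R) => [|x s].
  by move/(f_equal size): E; rewrite size_rcons.
have hp : (0 < fib (3 * m + 4))%N by rewrite addnS; apply: fib_pos.
set a := fib (3 * m + 4) in IH *. set b := fib (3 * m + 3) in IH *.
set c := fib (3 * m + 1) in IH *. set d := fib (3 * m) in IH *.
have hA : ((a%:R + k%:R * b%:R) : rat) != 0.
  rewrite -natrM -natrD pnatr_eq0 -lt0n. lia.
have -> : cf [:: 4, x & s] = 4 + (cf (x :: s))^-1 by [].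
rewrite -E IH invf_div !natrD ?natrM.
field.
by rewrite -!natrM -natrD pnatr_eq0 -lt0n; lia.
Qed.
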